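(* Let $\mathfrak g_0$ be a proper (continuous or sequential) contraction of the real $n$-dimensional Lie algebra $\mathfrak g$. Then $\mathrm{rank}_+\kappa_{\mathfrak g_0}\le\mathrm{rank}_+\kappa_{\mathfrak g}$ and $\mathrm{rank}_-\kappa_{\mathfrak g_0}\le\mathrm{rank}_-\kappa_{\mathfrak g}$. Moreover, for every $\alpha\in\mathbb R$, $\mathrm{rank}_+\tilde\kappa^\alpha_{\mathfrak g_0}\le\mathrm{rank}_+\tilde\kappa^\alpha_{\mathfrak g}$ and $\mathrm{rank}_-\tilde\kappa^\alpha_{\mathfrak g_0}\le\mathrm{rank}_-\tilde\kappa^\alpha_{\mathfrak g}$.
   Context: Let $V$ be an $n$-dimensional real vector space and $\mathfrak g=(V,[\cdot,\cdot])$ a Lie algebra. Continuous contraction: for a continuous map $U:(0,1]\to GL(V)$, $\varepsilon\mapsto U_\varepsilon$, put $[x,y]_\varepsilon=U_\varepsilon^{-1}[U_\varepsilon x,U_\varepsilon y]$; if $[x,y]_0:=\lim_{\varepsilon\to0^+}[x,y]_\varepsilon$ exists for all $x,y\in V$, the Lie algebra $\mathfrak g_0=(V,[\cdot,\cdot]_0)$ is called a (one-parametric continuous) contraction of $\mathfrak g$. Sequential contraction: the same with a sequence $U_p\in GL(V)$ and $p\to\infty$. A contraction is proper if $\mathfrak g_0\not\cong\mathfrak g$. The Killing form is $\kappa_{\mathfrak g}(u,v)=\mathrm{tr}(\mathrm{ad}_u\mathrm{ad}_v)$ and the modified Killing form is $\tilde\kappa^\alpha_{\mathfrak g}(u,v)=\mathrm{tr}(\mathrm{ad}_u\mathrm{ad}_v)+\alpha\,\mathrm{tr}(\mathrm{ad}_u)\mathrm{tr}(\mathrm{ad}_v)$.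 For a real symmetric bilinear form, $\mathrm{rank}_+$ (resp. $\mathrm{rank}_-$) is the number of positive (resp. negative) entries in a diagonal form (Sylvester inertia). *)

(* Defs.v *)
From HB Require Import structures.
From mathcomp Require Import all_boot all_order all_algebra.
From mathcomp Require Import all_classical all_reals all_analysis.
Set Implicit Arguments. Unset Strict Implicit. Unset Printing Implicit Defensive.
Import Order.TTheory GRing.Theory Num.Theory numFieldNormedType.Exports.
Local Open Scope classical_set_scope.
Local Open Scope ring_scope.

Section LieDefs.
Variables (R : realType) (n : nat).

(* V = R^n, vectors are row vectors; a linear map U in GL(V) acts as x |-> x *m U. *)
Definition bracket := 'rV[R]_n -> 'rV[R]_n -> 'rV[R]_n.

Definition is_lie_bracket (br : bracket) : Prop :=
  [/\ (forall (a : R) x y z, br (a *: x + y) z = a *: br x z + br y z),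
      (forall (a : R) x y z, br z (a *: x + y) = a *: br z x + br z y),
      (forall x, br x x = 0) &
      (forall x y z, br x (br y z) + br y (br z x) + br z (br x y) = 0)].

Definition evec (i : 'I_n) : 'rV[R]_n := delta_mx 0 i.

(* Matrix of ad_u : v |-> br u v (row i = image of e_i). *)
Definition ad_mx (br : bracket) (u : 'rV[R]_n) : 'M[R]_n :=
  \matrix_(i, j) br u (evec i) 0 j.

Definition killing (br : bracket) (u v : 'rV[R]_n) : R :=
  \tr (ad_mx br u *m ad_mx br v).

Definition mkilling (alpha : R) (br : bracket) (u v : 'rV[R]_n) : R :=
  killing br u v + alpha * \tr (ad_mx br u) * \tr (ad_mx br v).

(* [inertia B p q]: in some basis (the rows of the invertible matrix P) the
   symmetric bilinear form B is diagonal with exactly p positive and q negative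
   diagonal entries; i.e. rank_+ B = p and rank_- B = q (Sylvester inertia). *)
Definition inertia (B : 'rV[R]_n -> 'rV[R]_n -> R) (p q : nat) : Prop :=
  exists P : 'M[R]_n,
    [/\ P \in unitmx,
        (forall i j : 'I_n, i != j -> B (row i P) (row j P) = 0),
        #|[pred i : 'I_n | 0 < B (row i P) (row i P)]| = p &
        #|[pred i : 'I_n | B (row i P) (row i P) < 0]| = q].

Definition contracted (br : bracket) (U : 'M[R]_n) : bracket :=
  fun x y => br (x *m U) (y *m U) *m invmx U.

Definition continuous_contraction (br br0 : bracket) : Prop :=
  exists U : R -> 'M[R]_n,
    [/\ (forall e : R, 0 < e <= 1 -> U e \in unitmx),
        (forall i j, {within [set e : R | 0 < e <= 1], continuous (fun e : R => U e i j)}%classic) &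
        (forall x y k,
           (fun e => contracted br (U e) x y 0 k) @ 0^'+ --> br0 x y 0 k)].

Definition sequential_contraction (br br0 : bracket) : Prop :=
  exists U : nat -> 'M[R]_n,
    (forall p, U p \in unitmx) /\
    (forall x y k,
       (fun p => contracted br (U p) x y 0 k) @ \oo --> br0 x y 0 k).

Definition lie_isomorphic (br0 br : bracket) : Prop :=
  exists A : 'M[R]_n, A \in unitmx /\
    (forall x y, br (x *m A) (y *m A) = br0 x y *m A).

End LieDefs.

(* Main.v *)
Require Import Defs.
From HB Require Import structures.
From mathcomp Require Import all_boot all_order all_algebra.
From mathcomp Require Import all_classical all_reals all_analysis.
From mathcomp Require Import ring lra zify.
Import Order.TTheory GRing.Theory Num.Theory numFieldNormedType.Exports.
Local Open Scope classical_set_scope.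
Local Open Scope ring_scope.

Section Forms.
Variables (R : realType) (n : nat).
Implicit Types (B : 'rV[R]_n -> 'rV[R]_n -> R).

Definition blin B :=
  (forall (a : R) x y z, B (a *: x + y) z = a * B x z + B y z) /\
  (forall (a : R) x y z, B z (a *: x + y) = a * B z x + B z y).

Lemma blin_sumL B (I : finType) (f : I -> 'rV[R]_n) z : blin B ->
  B (\sum_i f i) z = \sum_i B (f i) z.
Proof.
case=> hl _.
have h0 : B 0 z = 0.
  by have := hl 1 0 0 z; rewrite scale1r addr0 mul1r; lra.
apply: (big_morph (fun x => B x z)) => // x y.
by rewrite -[x]scale1r hl mul1r scale1r.
Qed.

Lemma blin_sumR B (I : finType) (f : I -> 'rV[R]_n) z : blin B ->
  B z (\sum_i f i) = \sum_i B z (f i).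
Proof.
case=> _ hl.
have h0 : B z 0 = 0.
  by have := hl 1 0 0 z; rewrite scale1r addr0 mul1r; lra.
apply: (big_morph (fun x => B z x)) => // x y.
by rewrite -[x]scale1r hl mul1r scale1r.
Qed.

Lemma blin_scaleL B a x z : blin B -> B (a *: x) z = a * B x z.
Proof.
case=> hl _; have := hl a x 0 z.
have := hl 1 0 0 z; rewrite scale1r addr0 mul1r => h0.
have -> : B 0 z = 0 by lra. by rewrite !addr0.
Qed.

Lemma blin_scaleR B a x z : blin B -> B z (a *: x) = a * B z x.
Proof.
case=> _ hl; have := hl a x 0 z.
have := hl 1 0 0 z; rewrite scale1r addr0 mul1r => h0.
have -> : B z 0 = 0 by lra. by rewrite !addr0.
Qed.

Lemma blin_expand B (c d : 'rV[R]_n) (P Q : 'M[R]_n) : blin B ->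
  B (c *m P) (d *m Q) = \sum_i \sum_j c 0 i * d 0 j * B (row i P) (row j Q).
Proof.
move=> hB; rewrite (mulmx_sum_row c) blin_sumL //; apply: eq_bigr => i _.
rewrite blin_scaleL // (mulmx_sum_row d) blin_sumR // mulr_sumr.
apply: eq_bigr => j _; rewrite blin_scaleR //; ring.
Qed.

Lemma rank_rowsub1 m k (f : 'I_k -> 'I_m) : injective f ->
  \rank (rowsub f (1%:M : 'M[R]_m)) = k.
Proof.
move=> finj; apply/eqP; rewrite eqn_leq rank_leq_row /=.
have e : rowsub f (1%:M : 'M[R]_m) *m (rowsub f 1%:M)^T = 1%:M.
  apply/matrixP => i j; rewrite -rowsubE !mxE (inj_eq finj) eq_sym //.
by rewrite -{1}(mxrank1 R k) -e mxrankM_maxl.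
Qed.

Lemma inter_exists (P0 P : 'M[R]_n) (S N : {pred 'I_n}) :
  P0 \in unitmx -> P \in unitmx -> (n < #|S| + #|N|)%N ->
  exists c d : 'rV[R]_n, [/\ c != 0, (forall i, i \notin S -> c 0 i = 0),
     (forall i, i \notin N -> d 0 i = 0) & c *m P0 = d *m P].
Proof.
move=> u0 u hn.
pose A0 := rowsub (@enum_val _ S) P0.
pose A1 := rowsub (@enum_val _ N) P.
have r0 : \rank A0 = #|S|.
  by rewrite /A0 rowsubE mxrankMfree ?row_free_unit // rank_rowsub1 //; apply: enum_val_inj.
have r1 : \rank A1 = #|N|.
  by rewrite /A1 rowsubE mxrankMfree ?row_free_unit // rank_rowsub1 //; apply: enum_val_inj.
have hc := mxrank_sum_cap A0 A1.
have hle := rank_leq_col (A0 + A1)%MS.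
have : (A0 :&: A1)%MS != 0.
  rewrite -mxrank_eq0; apply/eqP => h0; move: hc; rewrite h0 r0 r1 addn0 => e.
  by move: hle; rewrite e leqNgt hn.
move=> nz.
have [i wi] : exists i, row i (A0 :&: A1)%MS != 0.
  apply/existsP; apply: contraNT nz; rewrite negb_exists => /forallP h.
  apply/eqP/row_matrixP => i; rewrite row0; exact/eqP/negPn/h.
set w := row i _ in wi.
have w0 : (w <= A0)%MS := submx_trans (row_sub _ _) (capmxSl _ _).
have w1 : (w <= A1)%MS := submx_trans (row_sub _ _) (capmxSr _ _).
case/submxP: w0 => c' ec; case/submxP: w1 => d' ed.
exists (c' *m rowsub (@enum_val _ S) 1%:M), (d' *m rowsub (@enum_val _ N) 1%:M).
split.
- apply: contraNneq wi => h; by rewrite ec /A0 rowsubE mulmxA h mul0mx.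
- move=> j jS; rewrite !mxE big1 // => k _; rewrite !mxE.
  have : enum_val k \in S by apply: enum_valP.
  by case: eqP => [->|_]; rewrite ?(negbTE jS) /= ?mulr0.
- move=> j jS; rewrite !mxE big1 // => k _; rewrite !mxE.
  have : enum_val k \in N by apply: enum_valP.
  by case: eqP => [->|_]; rewrite ?(negbTE jS) /= ?mulr0.
- by rewrite -!mulmxA -!rowsubE -ec -ed.
Qed.
Lemma t1 (a b g e di dj : R) : `|g| < e -> e <= di -> e <= dj ->
  - ((a^+2 * di + b^+2 * dj) / 2) <= a * b * g.
Proof.
move=> hg h1 h2.
have h3 : `|a * b * g| <= `|a| * `|b| * e.
  rewrite !normrM ler_wpM2l ?mulr_ge0 ?normr_ge0 //; exact: ltW.
have h4 : `|a| * `|b| * e <= (a^+2 + b^+2)/2 * e.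
  rewrite ler_wpM2r //; first by apply: le_trans (ltW hg); exact: normr_ge0.
  have : 0 <= (`|a| - `|b|)^+2 by apply: sqr_ge0.
  rewrite -!(real_normK (num_real a)) -!(real_normK (num_real b)). nra.
have h5 : (a^+2 + b^+2)/2 * e <= (a^+2 * di + b^+2 * dj) / 2.
  have ha := sqr_ge0 a; have hb := sqr_ge0 b. nra.
have := ler_normr (a*b*g). 
have := ler_norm (- (a*b*g)). rewrite normrN. lra.
Qed.

Lemma semicont {T : Type} (F : set_system T) {FF : ProperFilter F}
  (Bt : T -> 'rV[R]_n -> 'rV[R]_n -> R) (B0 : 'rV[R]_n -> 'rV[R]_n -> R)
  (p q p0 q0 : nat) :
  (\forall t \near F, blin (Bt t) /\ inertia (Bt t) p q) ->
  (forall x y, (fun t => Bt t x y) @ F --> B0 x y) ->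
  inertia B0 p0 q0 -> (p0 <= p)%N.
Proof.
move=> hev hcv [P0 [u0 off0 card0 _]].
rewrite leqNgt; apply/negP => hlt.
pose d i := B0 (row i P0) (row i P0).
pose del i := if 0 < d i then d i / (2 * n.+1%:R) else 1.
have delP i : 0 < del i.
  rewrite /del; case: ifP => h //; rewrite divr_gt0 // mulr_gt0 // ltr0n.
pose e i j := Num.min (del i) (del j).
have eP i j : 0 < e i j by rewrite /e lt_min !delP.
have hnear : \forall t \near F, forall i j,
    `|B0 (row i P0) (row j P0) - Bt t (row i P0) (row j P0)| < e i j.
  apply: filter_forall => i; apply: filter_forall => j.
  exact: (cvgr_dist_lt _ _ (hcv (row i P0) (row j P0)) _ (eP i j)).
have [t [[hbl [P [u offP cardP _]]] ht]] :=
  filter_ex (filterI hev hnear).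
pose S0 := [pred i | 0 < d i].
pose N := [pred i | ~~ (0 < Bt t (row i P) (row i P))].
have cS : #|S0| = p0 by rewrite -card0.
have cN : #|N| = (n - p)%N.
  have := cardC [pred i | 0 < Bt t (row i P) (row i P)].
  rewrite card_ord => h. have e1 : #|N| = #|[predC [pred i | 0 < Bt t (row i P) (row i P)]]| by apply: eq_card. rewrite e1; move: h; rewrite cardP; move=> h; apply/eqP; rewrite -(eqn_add2l p) subnKC; [by rewrite h | by rewrite -h leq_addr].
have pn : (p <= n)%N by rewrite -cardP -[X in (_ <= X)%N]card_ord max_card.
have hn : (n < #|S0| + #|N|)%N by rewrite cS cN; lia.
have [c [dd [cnz cS0 dN ecd]]] := @inter_exists P0 P S0 N u0 u hn.
have hle : Bt t (c *m P0) (c *m P0) <= 0.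
  rewrite ecd blin_expand //.
  rewrite (eq_bigr (fun i => dd 0 i ^+ 2 * Bt t (row i P) (row i P))); last first.
    move=> i _; rewrite (bigD1 i) //= big1 ?addr0; first by rewrite expr2.
    by move=> j ji; rewrite offP ?mulr0 // eq_sym.
  apply: sumr_le0 => i _.
  have [iN|iN] := boolP (i \in N).
    by apply: mulr_ge0_le0; [exact: sqr_ge0 | rewrite leNgt; exact: iN].
  by rewrite dN // expr2 !mul0r.
have hgt : 0 < Bt t (c *m P0) (c *m P0).
  rewrite blin_expand //.
  pose a i := c 0 i ^+ 2 * del i.
  pose L i j := (if i == j then c 0 i ^+ 2 * d i else 0) - (a i + a j) / 2.
  apply: (@lt_le_trans _ _ (\sum_i \sum_j L i j)); last first.
    apply: ler_sum => i _; apply: ler_sum => j _.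
    rewrite /L; case: eqP => [<-|/eqP ij].
      have := ht i i; rewrite /e minxx => hi.
      have := ler_norm (d i - Bt t (row i P0) (row i P0)).
      have := sqr_ge0 (c 0 i); rewrite /a /d; nra.
    rewrite sub0r /a; apply: (@t1 _ _ _ (e i j)); last 2 first.
    - by rewrite /e ge_min lexx.
    - by rewrite /e ge_min lexx orbT.
    by have := ht i j; rewrite off0 // sub0r normrN.
  have eL : \sum_i \sum_j L i j = \sum_i (c 0 i ^+ 2 * d i - a i *+ n).
    rewrite /L; under eq_bigr => i _ do rewrite sumrB.
    rewrite sumrB [in RHS]sumrB; congr (_ - _).
      apply: eq_bigr => i _; rewrite (bigD1 i) //= eqxx big1 ?addr0 // => j.
      by rewrite eq_sym => /negbTE ->.
    under eq_bigr => i _ do under eq_bigr => j _ do rewrite mulrDl.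
    under eq_bigr => i _ do rewrite big_split /=.
    rewrite big_split /= exchange_big /= -mulr2n.
    rewrite big_const_ord iter_addr_0 -mulrnA mulnC mulrnA.
    rewrite [RHS]sumrMnl; congr (_ *+ _); rewrite -sumrMnl; apply: eq_bigr => i _.
    by rewrite -mulr_natr; field.
  rewrite eL.
  have term i : 0 <= c 0 i ^+ 2 * d i - a i *+ n /\
       (c 0 i != 0 -> 0 < c 0 i ^+ 2 * d i - a i *+ n).
    rewrite /a /del; case: ifP => hd; last first.
      rewrite cS0; last by rewrite /S0 inE /= hd.  set z := (0 ^+ 2 : R). have -> : z = 0 by rewrite /z expr2 mul0r. by rewrite !mul0r mul0rn subr0 eqxx; split.
    set X := c 0 i ^+ 2 * d i.
    have hd0 : 0 < d i by rewrite hd.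
    have hX : 0 <= X by rewrite /X mulr_ge0 ?sqr_ge0 // ltW.
    have hN : (n.+1%:R : R) = n%:R + 1 by rewrite -natr1.
    have hn0 : (0 : R) <= n%:R by [].
    rewrite -mulr_natr mulrA -/X.
    set y := X / (2 * n.+1%:R).
    have hy : X = y * (2 * (n%:R + 1)) by rewrite /y -hN mulfVK // mulf_neq0 // pnatr_eq0.
    have y0 : 0 <= y by rewrite /y divr_ge0 // mulr_ge0 // ler0n.
    have ny0 : 0 <= y * n%:R by rewrite mulr_ge0.
    split; first nra.
    move=> ci; have X0 : 0 < X by rewrite /X mulr_gt0 // exprn_even_gt0 // ci orbT.
    nra.
  have [i ci] : exists i, c 0 i != 0.
    apply/existsP; apply: contraNT cnz; rewrite negb_exists => /forallP h.
    apply/eqP/matrixP => k i; rewrite ord1 mxE; exact/eqP/negPn/h.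
  apply: (lt_le_trans ((term i).2 ci)); rewrite (bigD1 i) //= lerDl.
  by apply: sumr_ge0 => j _; case: (term j).
by move: (lt_le_trans hgt hle); rewrite ltxx.
Qed.

Lemma inertia_neg B p q : inertia B p q -> inertia (fun x y => - B x y) q p.
Proof.
case=> P [u off cp cq]; exists P; split => //.
- by move=> i j ij; rewrite off // oppr0.
- by rewrite -cq; apply: eq_card => i; rewrite !inE oppr_gt0.
- by rewrite -cp; apply: eq_card => i; rewrite !inE oppr_lt0.
Qed.

Lemma blin_neg B : blin B -> blin (fun x y => - B x y).
Proof. by case=> h1 h2; split => a x y z; rewrite ?h1 ?h2; ring. Qed.

Lemma inertia_U B (U : 'M[R]_n) p q : U \in unitmx -> inertia B p q ->
  inertia (fun x y => B (x *m U) (y *m U)) p q.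
Proof.
move=> uU [P [u off cp cq]]; exists (P *m invmx U).
have rw i : row i (P *m invmx U) *m U = row i P by rewrite row_mul mulmxKV.
split.
- by rewrite unitmx_mul u unitmx_inv.
- by move=> i j ij; rewrite !rw off.
- by rewrite -cp; apply: eq_card => i; rewrite !inE !rw.
- by rewrite -cq; apply: eq_card => i; rewrite !inE !rw.
Qed.

Lemma blin_U B (U : 'M[R]_n) : blin B -> blin (fun x y => B (x *m U) (y *m U)).
Proof.
by case=> h1 h2; split => a x y z; rewrite mulmxDl -scalemxAl ?h1 ?h2.
Qed.

Lemma semicont2 {T : Type} (F : set_system T) {FF : ProperFilter F}
  (Bt : T -> 'rV[R]_n -> 'rV[R]_n -> R) (B0 : 'rV[R]_n -> 'rV[R]_n -> R)
  (p q p0 q0 : nat) :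
  (\forall t \near F, blin (Bt t) /\ inertia (Bt t) p q) ->
  (forall x y, (fun t => Bt t x y) @ F --> B0 x y) ->
  inertia B0 p0 q0 -> (p0 <= p)%N /\ (q0 <= q)%N.
Proof.
move=> hev hcv h0; split; first exact: semicont hev hcv h0.
apply: (@semicont _ F FF (fun t x y => - Bt t x y) (fun x y => - B0 x y) q p q0 p0).
- apply: filterS hev => t [hb hi]; split; [exact: blin_neg | exact: inertia_neg].
- by move=> x y; apply: cvgN.
- exact: inertia_neg.
Qed.

End Forms.

Section Lie.
Variables (R : realType) (n : nat).

Lemma br_ad (br : bracket R n) u v : is_lie_bracket br -> br u v = v *m ad_mx br u.
Proof.
case=> _ h2 _ _.
have h0 : br u 0 = 0.
  have := h2 1 0 0 u; rewrite scale1r addr0 scale1r => e.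
  by move: e => /(congr1 (fun z => z - br u 0)); rewrite subrr addrK.
have hadd x y : br u (x + y) = br u x + br u y by rewrite -[x]scale1r h2 !scale1r.
have hsc a x : br u (a *: x) = a *: br u x by rewrite -[a *: x]addr0 h2 h0 addr0.
rewrite {1}(row_sum_delta v) (big_morph (br u) hadd h0) mulmx_sum_row.
apply: eq_bigr => i _; rewrite hsc; congr (_ *: _).
by apply/rowP => j; rewrite !mxE.
Qed.

Lemma ad_lin (br : bracket R n) a x y : is_lie_bracket br ->
  ad_mx br (a *: x + y) = a *: ad_mx br x + ad_mx br y.
Proof. by case=> h1 _ _ _; apply/matrixP => i j; rewrite !mxE h1 !mxE. Qed.

Lemma ad_contr (br : bracket R n) (U : 'M[R]_n) x : is_lie_bracket br ->
  ad_mx (contracted br U) x = U *m ad_mx br (x *m U) *m invmx U.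
Proof.
move=> hl; apply/row_matrixP => i.
have r : row i (ad_mx (contracted br U) x) = contracted br U x (@evec R n i).
  by apply/rowP => j; rewrite !mxE.
by rewrite r /contracted (br_ad _ _ _ hl) !row_mul rowE.
Qed.

Lemma killing_contr (br : bracket R n) (U : 'M[R]_n) x y : is_lie_bracket br ->
  U \in unitmx ->
  killing (contracted br U) x y = killing br (x *m U) (y *m U).
Proof.
move=> hl uU; rewrite /killing !ad_contr //.
rewrite -!mulmxA (mulmxA (invmx U) U) mulVmx // mul1mx !mulmxA mxtrace_mulC.
by rewrite !mulmxA mulVmx // mul1mx.
Qed.

Lemma tr_contr (br : bracket R n) (U : 'M[R]_n) x : is_lie_bracket br ->
  U \in unitmx ->
  \tr (ad_mx (contracted br U) x) = \tr (ad_mx br (x *m U)).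
Proof.
move=> hl uU; by rewrite ad_contr // mxtrace_mulC mulmxA mulVmx // mul1mx.
Qed.

Lemma mkilling_contr alpha (br : bracket R n) (U : 'M[R]_n) x y : is_lie_bracket br ->
  U \in unitmx ->
  mkilling alpha (contracted br U) x y = mkilling alpha br (x *m U) (y *m U).
Proof. by move=> hl uU; rewrite /mkilling killing_contr // !tr_contr. Qed.

Lemma blin_killing (br : bracket R n) : is_lie_bracket br -> @blin R n (killing br).
Proof.
move=> hl; split => a x y z; rewrite /killing ad_lin //.
  by rewrite mulmxDl -scalemxAl mxtraceD mxtraceZ.
by rewrite mulmxDr -scalemxAr mxtraceD mxtraceZ.
Qed.

Lemma blin_mkilling alpha (br : bracket R n) : is_lie_bracket br ->
  @blin R n (mkilling alpha br).
Proof.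
move=> hl; have [k1 k2] := @blin_killing br hl.
split => a x y z; rewrite /mkilling ?k1 ?k2 ad_lin // mxtraceD mxtraceZ; ring.
Qed.

Lemma cvg_sumF {T : Type} (F : set_system T) {FF : Filter F} (I : finType)
  (f : I -> T -> R) (l : I -> R) :
  (forall i, f i @ F --> l i) -> (fun t => \sum_i f i t) @ F --> \sum_i l i.
Proof.
move=> h.
suff H : forall s : seq I, (fun t => \sum_(i <- s) f i t) @ F --> \sum_(i <- s) l i.
  exact: H.
elim => [|i s ih].
  under eq_fun do rewrite big_nil. rewrite big_nil; exact: cvg_cst.
under eq_fun do rewrite big_cons. rewrite big_cons; exact: cvgD.
Qed.

Lemma cvg_ad {T : Type} (F : set_system T) {FF : Filter F} (brt : T -> bracket R n)
  (br0 : bracket R n) :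
  (forall x y k, (fun t => brt t x y 0 k) @ F --> br0 x y 0 k) ->
  forall x i j, (fun t => ad_mx (brt t) x i j) @ F --> ad_mx br0 x i j.
Proof. move=> h x i j; under eq_fun do rewrite mxE. rewrite mxE; exact: h. Qed.

Lemma cvg_killing {T : Type} (F : set_system T) {FF : Filter F} (brt : T -> bracket R n)
  (br0 : bracket R n) :
  (forall x y k, (fun t => brt t x y 0 k) @ F --> br0 x y 0 k) ->
  forall x y, (fun t => killing (brt t) x y) @ F --> killing br0 x y.
Proof.
move=> h x y; have hE := @cvg_ad _ F _ brt br0 h.
rewrite /killing /mxtrace; under eq_fun do under eq_bigr do rewrite mxE.
under eq_bigr do rewrite mxE.
apply: cvg_sumF => i; apply: cvg_sumF => j; apply: cvgM; [exact: hE | exact: hE].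
Qed.

Lemma cvg_tr {T : Type} (F : set_system T) {FF : Filter F} (brt : T -> bracket R n)
  (br0 : bracket R n) :
  (forall x y k, (fun t => brt t x y 0 k) @ F --> br0 x y 0 k) ->
  forall x, (fun t => \tr (ad_mx (brt t) x)) @ F --> \tr (ad_mx br0 x).
Proof. move=> h x; apply: cvg_sumF => i; exact: cvg_ad. Qed.

Lemma cvg_mkilling alpha {T : Type} (F : set_system T) {FF : Filter F}
  (brt : T -> bracket R n) (br0 : bracket R n) :
  (forall x y k, (fun t => brt t x y 0 k) @ F --> br0 x y 0 k) ->
  forall x y, (fun t => mkilling alpha (brt t) x y) @ F --> mkilling alpha br0 x y.
Proof.
move=> h x y; rewrite /mkilling; apply: cvgD; first exact: cvg_killing.
apply: cvgM; last exact: cvg_tr.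
apply: cvgM; [exact: cvg_cst | exact: cvg_tr].
Qed.

Lemma contr_ineq {T : Type} (F : set_system T) {FF : ProperFilter F}
  (U : T -> 'M[R]_n) (br br0 : bracket R n)
  (K : bracket R n -> 'rV[R]_n -> 'rV[R]_n -> R) (p q p0 q0 : nat) :
  (\forall t \near F, U t \in unitmx) ->
  @blin R n (K br) ->
  (forall V, V \in unitmx -> forall x y,
      K (contracted br V) x y = K br (x *m V) (y *m V)) ->
  (forall x y, (fun t => K (contracted br (U t)) x y) @ F --> K br0 x y) ->
  inertia (K br) p q -> inertia (K br0) p0 q0 -> (p0 <= p)%N /\ (q0 <= q)%N.
Proof.
move=> hU hb hK hc hi hi0.
apply: (@semicont2 R n T F FF (fun t => K (contracted br (U t))) (K br0) p q p0 q0) => //.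
apply: filterS hU => t ut.
have -> : K (contracted br (U t)) = fun x y => K br (x *m U t) (y *m U t).
  by apply/funext => x; apply/funext => y; exact: hK.
split; [exact: blin_U | exact: inertia_U].
Qed.
End Lie.

Theorem theorem1 (R : realType) (n : nat) (br br0 : bracket R n) :
  is_lie_bracket br ->
  (continuous_contraction br br0 \/ sequential_contraction br br0) ->
  ~ lie_isomorphic br0 br ->
  (forall p q p0 q0 : nat,
     inertia (killing br) p q -> inertia (killing br0) p0 q0 ->
     (p0 <= p)%N /\ (q0 <= q)%N) /\
  (forall (alpha : R) (p q p0 q0 : nat),
     inertia (mkilling alpha br) p q -> inertia (mkilling alpha br0) p0 q0 ->
     (p0 <= p)%N /\ (q0 <= q)%N).
Proof.
move=> hl [[U [hU _ hc]] | [U [hU hc]]] _.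
- have hev : \forall e \near (0 : R)^'+, U e \in unitmx.
    apply: filterS2 (nbhs_right_gt 0) (nbhs_right_le ltr01) => e h1 h2.
    by apply: hU; rewrite h1 h2.
  split.
  + move=> p q p0 q0; apply: (@contr_ineq R n _ ((0 : R)^'+) _ U br br0 (@killing R n) p q p0 q0) => //.
    * exact: blin_killing.
    * by move=> V uV x y; apply: killing_contr.
    * exact: (@cvg_killing R n _ _ _ (fun t => contracted br (U t))).
  + move=> alpha p q p0 q0;
    apply: (@contr_ineq R n _ ((0 : R)^'+) _ U br br0 (@mkilling R n alpha) p q p0 q0) => //.
    * exact: blin_mkilling.
    * by move=> V uV x y; apply: mkilling_contr.
    * exact: (@cvg_mkilling R n alpha _ _ _ (fun t => contracted br (U t))).
- have hev : \forall p \near \oo, U p \in unitmx by apply: nearW.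
  split.
  + move=> p q p0 q0; apply: (@contr_ineq R n _ (\oo) _ U br br0 (@killing R n) p q p0 q0) => //.
    * exact: blin_killing.
    * by move=> V uV x y; apply: killing_contr.
    * exact: (@cvg_killing R n _ _ _ (fun t => contracted br (U t))).
  + move=> alpha p q p0 q0;
    apply: (@contr_ineq R n _ (\oo) _ U br br0 (@mkilling R n alpha) p q p0 q0) => //.
    * exact: blin_mkilling.
    * by move=> V uV x y; apply: mkilling_contr.
    * exact: (@cvg_mkilling R n alpha _ _ _ (fun t => contracted br (U t))).
Qed.
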